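(* Let $X$ be a $T_1$ topological space and $f,g\in T''(X)$. If $f\in M(g)$, then $Z(g)\subseteq Z(f)$.
   Context: $C(X)$ is the ring of real-valued continuous functions on $X$; a cozero set is a set $\{x: h(x)\neq 0\}$ with $h\in C(X)$. $T''(X)$ is the ring (under pointwise operations) of all functions $f\colon X\to\mathbb{R}$ for which there is a dense cozero set $U$ of $X$ with $f|_U$ continuous. $Z(f)=\{x\in X: f(x)=0\}$. $M(g)$ denotes the intersection of all maximal ideals of $T''(X)$ containing $g$. *)

(* Defs.v *)
From HB Require Import structures.
From mathcomp Require Import all_boot all_order all_algebra.
From mathcomp Require Import all_classical all_reals all_analysis.
Unset Printing Implicit Defensive.
Import Order.TTheory GRing.Theory Num.Theory numFieldNormedType.Exports.
Local Open Scope classical_set_scope.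
Local Open Scope ring_scope.

Definition cozero_set (R : realType) (X : topologicalType) (U : set X) : Prop :=
  exists h : X -> R, continuous h /\ U = [set x | h x != 0].

Definition Tpp (R : realType) (X : topologicalType) : set (X -> R) :=
  [set f | exists U : set X,
      cozero_set R X U /\ dense U /\ {within U, continuous f}].

Definition Tpp_ideal (R : realType) (X : topologicalType) (I : set (X -> R)) : Prop :=
  [/\ I `<=` Tpp R X,
      I (fun _ => 0),
      (forall a b, I a -> I b -> I (fun x => a x - b x)) &
      (forall r a, Tpp R X r -> I a -> I (fun x => r x * a x))].

Definition Tpp_maximal_ideal (R : realType) (X : topologicalType) (M : set (X -> R)) : Prop :=
  [/\ Tpp_ideal R X M, M <> Tpp R X &
      (forall J, Tpp_ideal R X J -> M `<=` J -> J = M \/ J = Tpp R X)].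

(* M(g): intersection of all maximal ideals of T''(X) containing g
   (taken inside T''(X), so equal to T''(X) when no maximal ideal contains g). *)
Definition Mint (R : realType) (X : topologicalType) (g : X -> R) : set (X -> R) :=
  [set f | Tpp R X f /\ forall M, Tpp_maximal_ideal R X M -> M g -> M f].

Definition Zset (R : realType) (X : Type) (f : X -> R) : set X := [set x | f x = 0].

(* Main.v *)
Require Import Defs.
From HB Require Import structures.
From mathcomp Require Import all_boot all_order all_algebra.
From mathcomp Require Import all_classical all_reals all_analysis.
Import Order.TTheory GRing.Theory Num.Theory numFieldNormedType.Exports.
Local Open Scope classical_set_scope.
Local Open Scope ring_scope.

Section S.
Variables (R : realType) (X : topologicalType).

Lemma cozero_open (U : set X) : cozero_set R X U -> open U.
Proof.
move=> [h [hc ->]].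
have -> : [set x | h x != 0] = h @^-1` [set y : R | y != 0] by [].
apply: open_comp; last exact: open_neq.
by move=> x _; exact: hc.
Qed.

Lemma dense_open_setI (U V : set X) : open U -> dense U -> dense V -> dense (U `&` V).
Proof.
move=> oU dU dV O O0 oO.
have [y [Oy Uy]] := dU O O0 oO.
have [z [[Oz Uz] Vz]] := dV (O `&` U) (ex_intro _ y (conj Oy Uy)) (openI oO oU).
by exists z.
Qed.

Lemma cozeroI (U V : set X) : cozero_set R X U -> cozero_set R X V ->
  cozero_set R X (U `&` V).
Proof.
move=> [h [hc ->]] [k [kc ->]]; exists (h \* k); split.
  by move=> x; apply: continuousM; [exact: hc|exact: kc].
by apply/seteqP; split => x /=; rewrite mulf_eq0 negb_or => /andP.
Qed.

Lemma Tpp_op (op : R -> R -> R) (a b : X -> R) :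
  (forall A : set X, {within A, continuous a} -> {within A, continuous b} ->
     {within A, continuous (fun x => op (a x) (b x))}) ->
  Tpp R X a -> Tpp R X b -> Tpp R X (fun x => op (a x) (b x)).
Proof.
move=> H [U [cU [dU aU]]] [V [cV [dV bV]]].
exists (U `&` V); split; [exact: cozeroI|split; first exact: (@dense_open_setI U V (cozero_open _ cU) dU dV)].
apply: H.
  by apply: continuous_subspaceW aU; apply: subIsetl.
by apply: continuous_subspaceW bV; apply: subIsetr.
Qed.

Lemma Tpp_sub a b : Tpp R X a -> Tpp R X b -> Tpp R X (fun x => a x - b x).
Proof.
move=> ha hb; apply: (@Tpp_op (fun u v => u - v)) ha hb => A ca cb.
move=> x; exact: (@continuousB R R^o (subspace A) a b x (ca x) (cb x)).
Qed.

Lemma Tpp_mul a b : Tpp R X a -> Tpp R X b -> Tpp R X (fun x => a x * b x).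
Proof.
move=> ha hb; apply: (@Tpp_op (fun u v => u * v)) ha hb => A ca cb.
move=> x; exact: (@continuousM R (subspace A) a b x (ca x) (cb x)).
Qed.

Lemma Tpp_cst (c : R) : Tpp R X (fun _ => c).
Proof.
exists setT; split.
  exists (fun _ => 1); split; first by move=> x; exact: cvg_cst.
  by apply/seteqP; split => x //= _; rewrite oner_neq0.
split; last by apply: continuous_subspaceT => x; exact: cvg_cst.
move=> O [y Oy] _; by exists y.
Qed.
End S.

Definition Mx (R : realType) (X : topologicalType) (x : X) : set (X -> R) :=
  [set h | Tpp R X h /\ h x = 0].

Lemma Mx_maximal (R : realType) (X : topologicalType) (x : X) :
  Tpp_maximal_ideal R X (Mx R X x).
Proof.
have idl : Tpp_ideal R X (Mx R X x).
  split.
  - by move=> h [].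
  - by split; [exact: Tpp_cst|].
  - move=> a b [ta ax] [tb bx]; split; first exact: Tpp_sub.
    by rewrite /= ax bx subrr.
  - move=> r a tr [ta ax]; split; first exact: Tpp_mul.
    by rewrite /= ax mulr0.
split => //.
  move=> E; have : Mx R X x (fun _ => 1) by rewrite E; exact: Tpp_cst.
  by move=> [_ /eqP]; rewrite oner_eq0.
move=> J [JT J0 JB JM] MJ.
have [JM'|] := pselect (J `<=` Mx R X x).
  by left; apply/seteqP; split.
move=> /existsNP [h /not_implyP [Jh Mh]].
have th := JT h Jh.
have hx : h x != 0 by apply/eqP => hx0; apply: Mh.
right; apply/seteqP; split => // k tk.
have tp : Tpp R X (fun y => h y - h x) by apply: Tpp_sub => //; exact: Tpp_cst.
have Jp : J (fun y => h y - h x) by apply: MJ; split => //=; rewrite subrr.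
have Jc := JB _ _ Jh Jp.
have tr : Tpp R X (fun y => k y * (h x)^-1) by apply: Tpp_mul => //; exact: Tpp_cst.
have := JM _ _ tr Jc.
congr J; apply/funext => y /=.
by rewrite opprB addrC subrK mulrVK // unitfE.
Qed.

Theorem lemma5p0 (R : realType) (X : topologicalType)
  (hT1 : accessible_space X) (f g : X -> R) :
  Tpp R X f -> Tpp R X g -> Mint R X g f -> Zset R X g `<=` Zset R X f.
Proof.
move=> tf tg [_ H] x gx.
by have [] := H _ (Mx_maximal R X x) (conj tg gx).
Qed.
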